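(* Let $\mathbf P$ be a cyclic CFSM protocol with the rational channel property and communication graph $(N,E)$, and let $\beta\in E$. A composite state $S'$ is not stable if and only if there is a family of regular sets $Q(S)\subseteq M_\beta^*$, $S\in\prod_{j\in N}K_j$, consistent with respect to $\mathbf P$ and $\beta$, such that $\lambda\in Q(S^0)$ and $\lambda\notin Q(S')$.
   Context: A CFSM protocol $\mathbf P$ has a finite directed communication graph $G=(N,E)$ (edge $\xi$ has tail $-\xi$, head $+\xi$), pairwise disjoint finite message sets $M_\xi$, and for each $j\in N$ a finite state machine $F_j=(K_j,\Sigma_j,T_j,h_j)$: finite state set $K_j$, initial state $h_j$, alphabet $\Sigma_j=\{+b: b\in M_\xi,\ j=+\xi\}\cup\{-b: b\in M_\xi,\ j=-\xi\}$, transitions $T_j\subseteq K_j\times\Sigma_j\times K_j$ ($+b$ = receive, $-b$ = send). A composite state is $S=(p_j:j\in N)$; a channel content is $C=(x_\xi:\xi\in E)$, $x_\xi\in M_\xi^*$; global states are pairs $(S,C)$; $C^0$ has all components equal to the empty word $\lambda$; $S^0=(h_j:j\in N)$ and $(S^0,C^0)$ is the initial global state. A step: some machine $F_i$ takes $p_i\xrightarrow{-b}q_i$ with $b\in M_\beta$, $i=-\beta$, appending $b$ to the end of $x_\beta$; or takes $p_i\xrightarrow{+b}q_i$ with $b\in M_\beta$, $i=+\beta$, provided $x_\beta$ begins with $b$, removing it; all else unchanged. $\vdash^*$ means reachability by finitely many steps. A composite state $S$ is stable if $(S^0,C^0)\vdash^*(S,C^0)$. $\mathbf L(S)=\{C:(S^0,C^0)\vdash^*(S,C)\}$.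 A subset of $\prod_{\xi\in E}M_\xi^*$ is rational if it belongs to the smallest family containing finite sets and closed under union, componentwise product and Kleene star; $\mathbf P$ has the rational channel property if every $\mathbf L(S)$ is rational. $\mathbf P$ is cyclic if $G$ is a directed cycle. A family $Q(S)\subseteq M_\beta^*$ is consistent with respect to $\mathbf P$ and $\beta$ if whenever $(S,(x_\xi))\vdash^*(S',(x'_\xi))$ with $x_\xi=x'_\xi=\lambda$ for $\xi\neq\beta$ and $x_\beta\in Q(S)$, then $x'_\beta\in Q(S')$. *)

(* Defs.v *)
From Stdlib Require Import Relations List.
From mathcomp Require Import all_boot.

Set Implicit Arguments.
Unset Strict Implicit.
Unset Printing Implicit Defensive.

Section Rational.
Variables (T : Type) (op : T -> T -> T) (e : T).

Inductive kstar (A : T -> Prop) : T -> Prop :=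
| kstar_nil : kstar A e
| kstar_cons a b : A a -> kstar A b -> kstar A (op a b).

Inductive rational_in : (T -> Prop) -> Prop :=
| rat_fin (s : list T) : rational_in (fun c => List.In c s)
| rat_union A B : rational_in A -> rational_in B ->
    rational_in (fun c => A c \/ B c)
| rat_prod A B : rational_in A -> rational_in B ->
    rational_in (fun c => exists a b, A a /\ B b /\ c = op a b)
| rat_star A : rational_in A -> rational_in (kstar A)
| rat_ext A B : rational_in A -> (forall c, A c <-> B c) -> rational_in B.
End Rational.

Definition regular (X : Type) (L : seq X -> Prop) : Prop :=
  rational_in (@cat X) [::] L.

(* Total message alphabet: a message b of edge xi is the pair (xi, b);  *)
(* this makes the sets M_xi pairwise disjoint by construction.         *)
Inductive action (E : Type) (M : E -> Type) :=
| Send of {xi : E & M xi}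
| Recv of {xi : E & M xi}.

Record protocol := Protocol {
  node : finType;
  edge : finType;
  tl : edge -> node;
  hd : edge -> node;
  msg : edge -> finType;
  state : node -> finType;
  init : forall j, state j;
  trans : forall j, state j -> action msg -> state j -> Prop;
  trans_alpha : forall j p a q, @trans j p a q ->
    match a with
    | Send b => tl (tag b) = j
    | Recv b => hd (tag b) = j
    end
}.

Arguments state : clear implicits.
Arguments msg : clear implicits.
Arguments init : clear implicits.

Definition cstate (P : protocol) := {dffun forall j : node P, state P j}.
Definition content (P : protocol) := {dffun forall xi : edge P, seq (msg P xi)}.
Definition gstate (P : protocol) := (cstate P * content P)%type.

Definition S0 (P : protocol) : cstate P := finfun (fun j => init P j).
Definition C0 (P : protocol) : content P := finfun (fun xi => [::] : seq (msg P xi)).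

Arguments S0 : clear implicits.
Arguments C0 : clear implicits.

Inductive step (P : protocol) : gstate P -> gstate P -> Prop :=
| step_send (S S' : cstate P) (C C' : content P) (i : node P)
    (b : {xi : edge P & msg P xi}) (q : state P i) :
    trans (S i) (Send b) q ->
    S' i = q -> (forall j, j <> i -> S' j = S j) ->
    C' (tag b) = rcons (C (tag b)) (tagged b) ->
    (forall xi, xi <> tag b -> C' xi = C xi) ->
    step (S, C) (S', C')
| step_recv (S S' : cstate P) (C C' : content P) (i : node P)
    (b : {xi : edge P & msg P xi}) (q : state P i) :
    trans (S i) (Recv b) q ->
    S' i = q -> (forall j, j <> i -> S' j = S j) ->
    C (tag b) = tagged b :: C' (tag b) ->
    (forall xi, xi <> tag b -> C' xi = C xi) ->
    step (S, C) (S', C').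

Definition reach (P : protocol) : gstate P -> gstate P -> Prop :=
  clos_refl_trans (gstate P) (@step P).

Definition stable (P : protocol) (S : cstate P) : Prop :=
  reach (S0 P, C0 P) (S, C0 P).

Definition Lang (P : protocol) (S : cstate P) : content P -> Prop :=
  fun C => reach (S0 P, C0 P) (S, C).

Definition content_cat (P : protocol) (a b : content P) : content P :=
  finfun (fun xi => a xi ++ b xi).

Definition rational_channel_property (P : protocol) : Prop :=
  forall S : cstate P, rational_in (@content_cat P) (C0 P) (Lang S).

Definition cyclic (P : protocol) : Prop :=
  exists (n : nat) (f : 'I_n.+1 -> node P) (g : 'I_n.+1 -> edge P),
    bijective f /\ bijective g /\
    forall i, tl (g i) = f i /\ hd (g i) = f (ordS i).

Definition consistent (P : protocol) (beta : edge P)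
    (Q : cstate P -> seq (msg P beta) -> Prop) : Prop :=
  forall (S S' : cstate P) (C C' : content P),
    reach (S, C) (S', C') ->
    (forall xi, xi <> beta -> C xi = [::]) ->
    (forall xi, xi <> beta -> C' xi = [::]) ->
    Q S (C beta) -> Q S' (C' beta).
Arguments consistent {P} beta Q.

(* Main.v *)
Require Import Defs.
From Stdlib Require Import Relations List Classical.
From mathcomp Require Import all_boot.

Set Implicit Arguments.
Unset Strict Implicit.

Section Proj.
Variables (P : protocol) (beta : edge P).

Definition oe (c : content P) := forall xi, xi <> beta -> c xi = [::].

Definition proj (A : content P -> Prop) (x : seq (msg P beta)) :=
  exists c, A c /\ oe c /\ c beta = x.

Lemma oe_cat a b : oe (content_cat a b) <-> oe a /\ oe b.
Proof.
split.
- move=> H; split=> xi /H; rewrite /content_cat ffunE;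
  by case: (a xi) => //; case: (b xi).
- move=> [Ha Hb] xi Hx; rewrite /content_cat ffunE Ha // Hb //.
Qed.

Lemma proj_rational A : rational_in (@content_cat P) (C0 P) A -> regular (proj A).
Proof.
rewrite /regular.
elim=> {A}.
- move=> s.
  have [s' Hs'] : exists s' : list (seq (msg P beta)),
      forall x, List.In x s' <-> proj (fun c => List.In c s) x.
  { elim: s => [|a s [s' IH]].
    - exists nil => x; split => //= [[c [[] _]]].
    - case: (classic (oe a)) => Ha.
      + exists (a beta :: s') => x; split.
        * move=> /= [<-|/IH [c [Hc [Hoe Hx]]]].
          -- by exists a; split; [left|].
          -- by exists c; split; [right|].
        * move=> [c [/= [<-|Hc] [Hoe Hx]]]; first by left.
          by right; apply/IH; exists c.
      + exists s' => x; split.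
        * move=> /IH [c [Hc [Hoe Hx]]]; by exists c; split; [right|].
        * move=> [c [/= [Hc|Hc] [Hoe Hx]]]; first by subst c.
          by apply/IH; exists c. }
  apply: rat_ext; first exact: (rat_fin _ _ s').
  exact: Hs'.
- move=> A B _ HA _ HB.
  apply: rat_ext; first exact: (rat_union HA HB).
  move=> x; split.
  + by move=> [[c [Hc [H1 H2]]]|[c [Hc [H1 H2]]]]; exists c; split=> //; [left|right].
  + move=> [c [[Hc|Hc] [H1 H2]]]; [left|right]; by exists c.
- move=> A B _ HA _ HB.
  apply: rat_ext; first exact: (rat_prod HA HB).
  move=> x; split.
  + move=> [x1 [x2 [[a [Ha [Hoa Hxa]]] [[b [Hb [Hob Hxb]]] ->]]]].
    exists (content_cat a b); split; first by exists a, b.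
    split; first by apply/oe_cat.
    by rewrite /content_cat ffunE Hxa Hxb.
  + move=> [c [[a [b [Ha [Hb ->]]]] [/oe_cat [Hoa Hob] <-]]].
    exists (a beta), (b beta); split; first by exists a.
    split; first by exists b.
    by rewrite /content_cat ffunE.
- move=> A _ HA.
  apply: rat_ext; first exact: (rat_star HA).
  move=> x; split.
  + elim=> [|x1 x2 [a [Ha [Hoa Hxa]]] _ [c [Hc [Hoc Hxc]]]].
    * exists (C0 P); split; first by constructor.
      by split=> [xi _|]; rewrite /C0 ffunE.
    * exists (content_cat a c); split; first by constructor.
      split; first by apply/oe_cat.
      by rewrite /content_cat ffunE Hxa Hxc.
  + move=> [c [Hc [Hoc <-]]].
    elim: Hc Hoc => [|a b Ha Hb IH]; first by rewrite /C0 ffunE => _; constructor.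
    move=> /oe_cat [Hoa Hob].
    rewrite /content_cat ffunE; constructor; last exact: IH.
    by exists a.
- move=> A B _ HA HAB.
  apply: rat_ext; first exact: HA.
  move=> x; split; move=> [c [Hc H]]; exists c; split=> //; by apply/HAB.
Qed.
End Proj.

Theorem theorem8p6 (P : protocol) (beta : edge P) (S' : cstate P) :
  cyclic P -> rational_channel_property P ->
  (~ stable S' <->
   exists Q : cstate P -> seq (msg P beta) -> Prop,
     (forall S : cstate P, regular (Q S)) /\
     consistent beta Q /\
     Q (S0 P) [::] /\ ~ Q S' [::]).
Proof.
move=> _ Hrat; split.
- move=> Hns.
  exists (fun S => @proj P beta (Lang S)); split.
  { move=> S; apply: proj_rational; exact: Hrat. }
  split.
  { move=> S S2 C C' Hr HC HC' [D [HD [HoD HDb]]].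
    have eDC : D = C.
    { apply/ffunP => xi; case: (eqVneq xi beta) => [->|/eqP ne] //.
      by rewrite HoD // HC. }
    subst D.
    exists C'; split; last by split.
    rewrite /Lang /reach; apply: rt_trans; [exact: HD|exact: Hr]. }
  split.
  { exists (C0 P); split; first exact: rt_refl.
    by split=> [xi _|]; rewrite /C0 ffunE. }
  move=> [C [HC [HoC HCb]]]; apply: Hns; rewrite /stable.
  have e : C0 P = C.
  { apply/ffunP => xi; rewrite /C0 ffunE.
    case: (eqVneq xi beta) => [->|/eqP ne]; first by rewrite HCb.
    by rewrite HoC. }
  by rewrite /Lang -e in HC.
- move=> [Q [_ [Hc [H0 HS']]]] Hst; apply: HS'.
  have E : forall xi, xi <> beta -> C0 P xi = [::] by move=> xi _; rewrite /C0 ffunE.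
  have := Hc _ _ _ _ Hst E E.
  by rewrite /C0 !ffunE; apply.
Qed.
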